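(* For every $n\in\mathbb{N}$, \[ \frac{2}{3n+1}\sum_{j=0}^{2n}\sum_{i=0}^{j}\frac{\binom{3n+1}{i}}{\binom{3n}{j}}=\psi(3n+2)-\psi(n+1)-\log 2+\frac{3n+2}{2n+2}\,{}_3F_2\!\left(1,1,3n+3;\,2,n+2;\,\tfrac12\right). \]
   Context: $\psi=\Gamma'/\Gamma$ is the digamma function (so $\psi(3n+2)-\psi(n+1)=H_{3n+1}-H_n$ with $H_m=\sum_{k=1}^m\frac1k$). Pochhammer symbol: $(\alpha)_0=1$, $(\alpha)_k=\alpha(\alpha+1)\cdots(\alpha+k-1)$. ${}_3F_2(a,b,c;d,e;z)=\sum_{k\ge0}\frac{(a)_k(b)_k(c)_k}{(d)_k(e)_k}\frac{z^k}{k!}$. *)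

(* Defs.v *)
From Stdlib Require Import Reals Arith Factorial.
Open Scope R_scope.

Fixpoint poch (a : R) (k : nat) : R :=
  match k with
  | O => 1
  | S k' => poch a k' * (a + INR k')
  end.

Fixpoint harm (m : nat) : R :=
  match m with
  | O => 0
  | S m' => harm m' + / INR (S m')
  end.

Definition hyp3F2_term (a b c d e z : R) (k : nat) : R :=
  poch a k * poch b k * poch c k / (poch d k * poch e k) * z ^ k / INR (fact k).

Definition is_hyp3F2 (a b c d e z S : R) : Prop :=
  infinite_sum (hyp3F2_term a b c d e z) S.

(* Main.v *)
Require Import Defs.
From Stdlib Require Import Reals Lra Lia Arith Factorial.
From Coquelicot Require Import Rcomplements Rbar Lim_seq Hierarchy Series Derive AutoDerive.
Open Scope R_scope.

Fixpoint pp (K : nat) (x : R) : R :=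
  match K with O => 0 | S K' => pp K' x + x ^ (S K') / INR (S K') end.
Fixpoint dp (K : nat) (x : R) : R :=
  match K with O => 0 | S K' => dp K' x + x ^ K' end.

Lemma pp_der K x : derivable_pt_lim (pp K) x (dp K x).
Proof.
  induction K as [|K IH]; simpl.
  - apply derivable_pt_lim_const.
  - apply (derivable_pt_lim_plus (pp K) (fun x => x ^ S K / INR (S K))); auto.
    apply is_derive_Reals. auto_derive; auto.
    destruct K; [field|]. field. pose proof (pos_INR (S K)); lra.
Qed.

Lemma dp_closed K x : dp K x * (1 - x) = 1 - x ^ K.
Proof. induction K; simpl; [ring|]. rewrite Rmult_plus_distr_r, IHK. ring. Qed.

Lemma pp0 K : pp K 0 = 0.
Proof. induction K; simpl; [reflexivity|]. rewrite IHK. unfold Rdiv; ring. Qed.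

Lemma ln2_bound K : 0 <= ln 2 - pp K (1/2) <= (1/2) ^ K.
Proof.
  set (g := fun x => - ln (1 - x) - pp K x).
  assert (Hd : forall c, 0 <= c <= 1/2 -> derivable_pt_lim g c (/(1-c) - dp K c)).
  { intros c Hc. unfold g.
    apply (derivable_pt_lim_minus (fun x => - ln (1 - x)) (pp K)); [|apply pp_der].
    apply is_derive_Reals. auto_derive. lra. field. lra. }
  destruct (MVT_cor2 g (fun c => /(1-c) - dp K c) 0 (1/2)) as [c [Hc1 Hc2]]; [lra|exact Hd|].
  unfold g in Hc1.
  assert (E0 : pp K 0 = 0) by apply pp0.
  assert (E1 : 1 - 1/2 = /2) by field. rewrite E1, ln_Rinv in Hc1 by lra.
  replace (1 - 0) with 1 in Hc1 by ring. rewrite ln_1, E0 in Hc1.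
  assert (Hq : / (1 - c) - dp K c = c ^ K / (1 - c)).
  { assert (H := dp_closed K c). field_simplify_eq; [|lra]. lra. }
  rewrite Hq in Hc1.
  assert (0 <= c ^ K) by (apply pow_le; lra).
  assert (c ^ K <= (1/2) ^ K) by (apply pow_incr; lra).
  assert (0 <= c ^ K / (1 - c) * (1/2 - 0)).
  { apply Rmult_le_pos; [|lra]. apply Rdiv_le_0_compat; lra. }
  assert (c ^ K / (1 - c) * (1/2 - 0) <= (1/2)^K).
  { assert (c^K/(1-c) <= 2 * (1/2)^K).
    { apply Rle_div_l; [lra|]. assert (1 - c >= 1/2) by lra. nra. }
    lra. }
  split; lra.
Qed.

Lemma ln2_series : is_series (fun k => (1/2) ^ k / INR (S k)) (2 * ln 2).
Proof.
  unfold is_series.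
  change (is_lim_seq (sum_n (fun k => (1/2) ^ k / INR (S k))) (2 * ln 2)).
  assert (E : forall K, sum_f_R0 (fun k => (1/2) ^ k / INR (S k)) K = 2 * pp (S K) (1/2)).
  { intros K. induction K.
    - simpl. field.
    - rewrite tech5, IHK. change (pp (S (S K)) (1/2)) with (pp (S K) (1/2) + (1/2) ^ (S (S K)) / INR (S (S K))).
      simpl pow. field; apply not_0_INR; lia. }
  apply is_lim_seq_ext with (u := fun K => 2 * pp (S K) (1/2)); [intros; now rewrite sum_n_Reals, E|].
  apply is_lim_seq_le_le with (u := fun K => 2 * ln 2 - 2 * (1/2) ^ (S K)) (w := fun K => 2 * ln 2).
  - intros K. pose proof (ln2_bound (S K)). lra.
  - assert (H : is_lim_seq (fun K => 2 * ln 2 - 2 * (1/2) ^ (S K)) (2 * ln 2 - 2 * 0)).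
    2:{ rewrite Rmult_0_r, Rminus_0_r in H. exact H. }
    apply is_lim_seq_minus'. apply is_lim_seq_const.
    apply (is_lim_seq_scal_l _ 2 0). apply -> is_lim_seq_incr_1. apply is_lim_seq_geom. rewrite Rabs_pos_eq; lra.
  - apply is_lim_seq_const.
Qed.

Lemma C_pos n k : 0 < C n k.
Proof.
  unfold C. apply Rdiv_lt_0_compat; [apply INR_fact_lt_0|].
  apply Rmult_lt_0_compat; apply INR_fact_lt_0.
Qed.

Lemma psum_lim (a : nat -> R) l : is_series a l <-> is_lim_seq (fun K => sum_f_R0 a K) l.
Proof.
  split; intros H.
  - apply is_lim_seq_ext with (u := sum_n a); [intros; apply sum_n_Reals|exact H].
  - change (is_lim_seq (sum_n a) l). apply is_lim_seq_ext with (u := fun K => sum_f_R0 a K);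
    [intros; symmetry; apply sum_n_Reals|exact H].
Qed.

Lemma s_series a r : (r <= a)%nat ->
  is_series (fun k => C (a + k) r * (1/2) ^ k) (2 * sum_f_R0 (fun i => C a i) r).
Proof.
  induction r as [|r IH]; intros Hr.
  - simpl. rewrite C_n_0.
    apply is_series_ext with (a := fun k => (1/2)^k).
    { intros; rewrite C_n_0, Rmult_1_l; reflexivity. }
    replace (2 * 1) with (/ (1 - 1/2)) by field. apply is_series_geom. rewrite Rabs_pos_eq; lra.
  - specialize (IH ltac:(lia)).
    set (x := fun k => C (a + k) (S r) * (1/2) ^ k).
    set (y := fun k => C (a + k) r * (1/2) ^ k).
    fold y in IH.
    assert (Hrec : forall k, x (S k) = (x k + y k) / 2).
    { intros k. unfold x, y. rewrite Nat.add_succ_r, <- pascal by lia. simpl pow. field. }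
    assert (Hid : forall K, sum_f_R0 x K = sum_f_R0 y K + 2 * x O - 2 * x (S K)).
    { induction K as [|K IHK].
      - simpl. rewrite (Hrec 0%nat). field.
      - rewrite !tech5, IHK, (Hrec (S K)). field. }
    apply psum_lim in IH.
    set (ly := 2 * sum_f_R0 (fun i => C a i) r) in *.
    assert (Hx0 : forall k, 0 <= x k).
    { intros k; unfold x. apply Rmult_le_pos; [left; apply C_pos| apply pow_le; lra]. }
    assert (Hy0 : forall k, 0 <= y k).
    { intros k; unfold y. apply Rmult_le_pos; [left; apply C_pos| apply pow_le; lra]. }
    assert (Hyb : forall K, sum_f_R0 y K <= ly).
    { apply is_lim_seq_incr_compare; [exact IH|]. intros K; rewrite tech5; specialize (Hy0 (S K)); lra. }
    assert (Hex : ex_finite_lim_seq (fun K => sum_f_R0 x K)).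
    { apply ex_finite_lim_seq_incr with (M := ly + 2 * x O).
      - intros K; rewrite tech5; specialize (Hx0 (S K)); lra.
      - intros K. rewrite Hid. specialize (Hyb K). specialize (Hx0 (S K)). lra. }
    destruct Hex as [lx Hlx].
    assert (Hx_0 : is_lim_seq x 0).
    { apply ex_series_lim_0. exists lx. apply psum_lim. exact Hlx. }
    assert (Hlim : is_lim_seq (fun K => sum_f_R0 y K + 2 * x O - 2 * x (S K)) (ly + 2 * x O - 2 * 0)).
    { apply is_lim_seq_minus'. apply is_lim_seq_plus'. exact IH. apply is_lim_seq_const.
      apply (is_lim_seq_scal_l _ 2 0). apply -> is_lim_seq_incr_1. exact Hx_0. }
    assert (Hlx' : is_lim_seq (fun K => sum_f_R0 x K) (ly + 2 * x O - 2 * 0)).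
    { apply is_lim_seq_ext with (u := fun K => sum_f_R0 y K + 2 * x O - 2 * x (S K)).
      intros; symmetry; apply Hid. exact Hlim. }
    apply psum_lim.
    replace (2 * sum_f_R0 (fun i => C a i) (S r)) with (ly + 2 * x O - 2 * 0).
    exact Hlx'.
    unfold ly, x. rewrite tech5. rewrite Nat.add_0_r. simpl pow. ring.
Qed.

Lemma ser_plus (a b : nat -> R) la lb : is_series a la -> is_series b lb ->
  is_series (fun n => a n + b n) (la + lb).
Proof. intros H1 H2. exact (is_series_plus a b la lb H1 H2). Qed.
Lemma ser_scal (c : R) (a : nat -> R) l : is_series a l ->
  is_series (fun n => c * a n) (c * l).
Proof. intros H. exact (is_series_scal c a l H). Qed.
Lemma ser_ext (a b : nat -> R) l : (forall n, a n = b n) -> is_series a l -> is_series b l.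
Proof. intros H1 H2. exact (is_series_ext a b l H1 H2). Qed.

Fixpoint Tv (N r : nat) : R :=
  match r with
  | O => 2 * ln 2
  | S r' => (INR (S N - r') * Tv N r' + 2 * sum_f_R0 (fun i => C (S (S N)) i) r') / INR (S r')
  end.

Definition U (N r k : nat) : R := C (S (S N) + k) r * (1/2) ^ k / INR (S k).

Lemma T_series N r : (r <= S N)%nat -> is_series (U N r) (Tv N r).
Proof.
  induction r as [|r IH]; intros Hr.
  - simpl. apply ser_ext with (a := fun k => (1/2)^k / INR (S k)); [|exact ln2_series].
    intros k; unfold U; rewrite C_n_0, Rmult_1_l; reflexivity.
  - specialize (IH ltac:(lia)).
    assert (E : Tv N (S r) = (INR (S N - r) * Tv N r + 2 * sum_f_R0 (fun i => C (S (S N)) i) r) / INR (S r)) by reflexivity.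
    rewrite E.
    pose proof (s_series (S (S N)) r ltac:(lia)) as Hs.
    pose proof (ser_plus _ _ _ _ (ser_scal (INR (S N - r)) _ _ IH) Hs) as H.
    pose proof (ser_scal (/ INR (S r)) _ _ H) as H'.
    apply ser_ext with (b := U N (S r)) in H'.
    + replace ((INR (S N - r) * Tv N r + 2 * sum_f_R0 (fun i => C (S (S N)) i) r) / INR (S r))
        with (/ INR (S r) * (INR (S N - r) * Tv N r + 2 * sum_f_R0 (fun i => C (S (S N)) i) r)) by (unfold Rdiv; ring).
      exact H'.
    + intros k. unfold U. rewrite pascal_step3 by lia.
      replace (S (S N) + k - r)%nat with (S k + (S N - r))%nat by lia.
      rewrite plus_INR.
      assert (0 < INR (S k)) by (apply lt_0_INR; lia).
      assert (0 < INR (S r)) by (apply lt_0_INR; lia).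
      field. lra.
Qed.

Fixpoint Q (N r : nat) : R :=
  match r with O => 0 | S r' => Q N r' + sum_f_R0 (fun i => C (S N) i / C N r') r' end.

Lemma sum_div (f : nat -> R) c r : sum_f_R0 (fun i => f i / c) r = sum_f_R0 f r / c.
Proof. induction r; simpl; [reflexivity|]. rewrite IHr. unfold Rdiv; ring. Qed.

Lemma sumC N r : (r < S N)%nat ->
  sum_f_R0 (fun i => C (S (S N)) i) r = 2 * sum_f_R0 (fun i => C (S N) i) r - C (S N) r.
Proof.
  induction r as [|r IH]; intros Hr.
  - simpl. rewrite !C_n_0. ring.
  - rewrite !tech5, IH by lia. rewrite <- (pascal (S N) r) by lia. ring.
Qed.

Lemma closed N r : (r <= S N)%nat ->
  Tv N r = C (S N) r * (2 * ln 2 + 4 / INR (S N) * Q N r - 2 * (harm (S N) - harm (S N - r))).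
Proof.
  induction r as [|r IH]; intros Hr.
  - simpl Q. rewrite C_n_0, Nat.sub_0_r. simpl Tv. ring.
  - assert (E : Tv N (S r) = (INR (S N - r) * Tv N r + 2 * sum_f_R0 (fun i => C (S (S N)) i) r) / INR (S r)) by reflexivity.
    rewrite E, IH by lia. clear E IH.
    rewrite sumC by lia.
    rewrite (pascal_step3 (S N) r) by lia.
    assert (EQ : Q N (S r) = Q N r + sum_f_R0 (fun i => C (S N) i) r / C N r)
      by (simpl Q; rewrite sum_div; reflexivity).
    rewrite EQ. clear EQ.
    pose proof (pascal_step2 N r ltac:(lia)) as P2.
    pose proof (C_pos N r) as Cp1. pose proof (C_pos (S N) r) as Cp2.
    replace (S N - r)%nat with (S (N - r)) in * by lia.
    change (S N - S r)%nat with (N - r)%nat.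
    change (harm (S (N - r))) with (harm (N - r) + / INR (S (N - r))).
    assert (0 < INR (S (N - r))) by (apply lt_0_INR; lia).
    assert (0 < INR (S r)) by (apply lt_0_INR; lia).
    assert (0 < INR (S N)) by (apply lt_0_INR; lia).
    set (s := sum_f_R0 (fun i => C (S N) i) r) in *.
    rewrite P2. field. repeat split; lra.
Qed.

Lemma poch_nat c k : poch (INR (S c)) k * INR (fact c) = INR (fact (c + k)).
Proof.
  induction k as [|k IH].
  - simpl poch. rewrite Nat.add_0_r. ring.
  - replace (c + S k)%nat with (S (c + k)) by lia.
    change (poch (INR (S c)) (S k)) with (poch (INR (S c)) k * (INR (S c) + INR k)).
    rewrite fact_simpl, mult_INR, <- IH.
    replace (INR (S (c + k))) with (INR (S c) + INR k) by (rewrite <- plus_INR; f_equal).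
    ring.
Qed.

Lemma poch_nat' c k : poch (INR (S c)) k = INR (fact (c + k)) / INR (fact c).
Proof. rewrite <- poch_nat. field. apply INR_fact_neq_0. Qed.

Lemma Qsum N r : Q N (S r) = sum_f_R0 (fun j => sum_f_R0 (fun i => C (S N) i / C N j) j) r.
Proof. induction r; [simpl; ring|]. rewrite tech5, <- IHr. reflexivity. Qed.

Lemma term_eq n k :
  hyp3F2_term 1 1 (INR (3 * n + 3)) 2 (INR (n + 2)) (1 / 2) k
  = / C (3 * n + 2) (2 * n + 1) * U (3 * n) (2 * n + 1) k.
Proof.
  unfold hyp3F2_term, U.
  replace (3 * n + 3)%nat with (S (3 * n + 2)) by lia.
  replace (n + 2)%nat with (S (n + 1)) by lia.
  replace 2 with (INR (S 1)) at 1 by (simpl; ring).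
  replace 1 with (INR (S 0)) at 1 2 by reflexivity.
  rewrite !poch_nat'.
  replace (S (S (3 * n)) + k)%nat with (3 * n + 2 + k)%nat by lia.
  unfold C.
  replace (3 * n + 2 + k - (2 * n + 1))%nat with (n + 1 + k)%nat by lia.
  replace (3 * n + 2 - (2 * n + 1))%nat with (n + 1)%nat by lia.
  replace (1 + k)%nat with (S k) by lia. simpl (0 + k)%nat.
  rewrite fact_simpl, mult_INR.
  pose proof (INR_fact_neq_0 k). pose proof (INR_fact_neq_0 (3*n+2+k)).
  pose proof (INR_fact_neq_0 (3*n+2)). pose proof (INR_fact_neq_0 (n+1+k)).
  pose proof (INR_fact_neq_0 (n+1)). pose proof (INR_fact_neq_0 (2*n+1)).
  assert (0 < INR (S k)) by (apply lt_0_INR; lia).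
  simpl (fact 0). simpl (fact 1). simpl (INR 1).
  field. repeat split; lra.
Qed.

Theorem mainTheorem16 (n : nat) :
  exists F : R,
    is_hyp3F2 1 1 (INR (3 * n + 3)) 2 (INR (n + 2)) (1 / 2) F /\
    2 / INR (3 * n + 1) *
      sum_f_R0 (fun j => sum_f_R0 (fun i => C (3 * n + 1) i / C (3 * n) j) j) (2 * n)
    = (harm (3 * n + 1) - harm n) - ln 2
      + INR (3 * n + 2) / INR (2 * n + 2) * F.
Proof.
  exists (/ C (3 * n + 2) (2 * n + 1) * Tv (3 * n) (2 * n + 1)).
  split.
  - unfold is_hyp3F2. apply is_series_Reals.
    apply ser_ext with (a := fun k => / C (3 * n + 2) (2 * n + 1) * U (3 * n) (2 * n + 1) k).
    { intros k. symmetry. apply term_eq. }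
    apply ser_scal. apply T_series. lia.
  - rewrite closed by lia.
    replace (3 * n + 1)%nat with (S (3 * n)) by lia.
    rewrite <- Qsum.
    replace (S (3 * n) - (2 * n + 1))%nat with n by lia.
    replace (3 * n + 2)%nat with (S (S (3 * n))) by lia.
    rewrite (pascal_step2 (S (3 * n)) (2 * n + 1)) by lia.
    replace (S (S (3 * n)) - (2 * n + 1))%nat with (S n) by lia.
    pose proof (C_pos (S (3 * n)) (2 * n + 1)).
    assert (0 < INR (S n)) by (apply lt_0_INR; lia).
    assert (0 < INR (S (3 * n))) by (apply lt_0_INR; lia).
    assert (0 < INR (S (S (3 * n)))) by (apply lt_0_INR; lia).
    assert (E : INR (2 * n + 2) = 2 * INR (S n)) by (rewrite S_INR, plus_INR, mult_INR; simpl; ring).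
    rewrite E. replace (Q (3*n) (2*n+1)) with (Q (3*n) (S (2*n))) by (f_equal; lia).
    field. repeat split; lra.
Qed.
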